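(* Let $H$ and $V$ be endofunctors on $\mathcal A$ such that $H+V$ is iteratable, let $a:HA\to A$ be a completely iterative algebra for $H$, and let $e:V\to T^{H+V}$ be a guarded recursive program scheme with (unique) interpreted solution $e^\ddagger_A:VA\to A$ in $(A,a)$. Then the algebra $[a,e^\ddagger_A]:(H+V)A\to A$ is a completely iterative algebra for $H+V$.
   Context: $\mathcal A$ is a category with binary coproducts. For an endofunctor $G$, a flat equation morphism in an object $A$ is a morphism $e:X\to GX+A$; a $G$-algebra $a:GA\to A$ is a completely iterative algebra (cia) if every flat equation morphism $e:X\to GX+A$ has a unique solution, i.e. a unique $e^\dagger:X\to A$ with $e^\dagger=[a,\mathrm{id}_A]\cdot(Ge^\dagger+\mathrm{id}_A)\cdot e$. An endofunctor $G$ is iteratable if for each object $X$ a terminal coalgebra $T^GX$ for $G(-)+X$ exists; the inverse of its structure is written $[\tau^G_X,\eta^G_X]:GT^GX+X\to T^GX$. Then $T^G$ is a monad with unit $\eta^G$ and multiplication $\mu^G$, $(T^GX,\tau^G_X)$ is the free cia for $G$ on $X$, and $\kappa^G=\tau^G\cdot G\eta^G:G\to T^G$. A recursive program scheme (rps) is a natural transformation $e:V\to T^{H+V}$; it is guarded if $e=\tau^{H+V}\cdot(\mathrm{inl}\,T^{H+V})\cdot f$ for some natural transformation $f:V\to HT^{H+V}$, where $\mathrm{inl}:H\to H+V$ is the coproduct injection. Given a cia $(A,a)$ for $H$, an interpreted solution of $e$ in $A$ is a $V$-algebra $e^\ddagger_A:VA\to A$ for which there is an Eilenberg–Moore algebra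 $\beta:T^{H+V}A\to A$ for the monad $T^{H+V}$ with $\beta\cdot\kappa^{H+V}_A=[a,e^\ddagger_A]$ and $e^\ddagger_A=\beta\cdot e_A$. (Every guarded rps has a unique interpreted solution in every cia.) *)

(* Defs.v *)
From Stdlib Require Import Setoid.

Record Cat := {
  ob :> Type;
  hom : ob -> ob -> Type;
  idm : forall A, hom A A;
  cmp : forall A B D, hom B D -> hom A B -> hom A D;
  cmp_id_l : forall A B (f : hom A B), cmp A B B (idm B) f = f;
  cmp_id_r : forall A B (f : hom A B), cmp A A B f (idm A) = f;
  cmp_assoc : forall A B D E (h : hom D E) (g : hom B D) (f : hom A B),
      cmp A D E h (cmp A B D g f) = cmp A B E (cmp B D E h g) f
}.
Arguments hom {c} _ _.
Arguments idm {c} _.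
Arguments cmp {c A B D} _ _.
Notation "g ∘ f" := (cmp g f) (at level 40, left associativity).

Record Coproducts (C : Cat) := {
  cop : ob C -> ob C -> ob C;
  inl_ : forall A B, hom A (cop A B);
  inr_ : forall A B, hom B (cop A B);
  copair : forall A B D, hom A D -> hom B D -> hom (cop A B) D;
  copair_inl : forall (A B D : ob C) (f : hom A D) (g : hom B D), copair A B D f g ∘ inl_ A B = f;
  copair_inr : forall (A B D : ob C) (f : hom A D) (g : hom B D), copair A B D f g ∘ inr_ A B = g;
  copair_uniq : forall (A B D : ob C) (f : hom A D) (g : hom B D) (h : hom (cop A B) D),
      h ∘ inl_ A B = f -> h ∘ inr_ A B = g -> h = copair A B D f g
}.
Arguments cop {C} _ _ _.
Arguments inl_ {C} _ {A B}.
Arguments inr_ {C} _ {A B}.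
Arguments copair {C} _ {A B D} _ _.

Record Functor (C : Cat) := {
  fobj : ob C -> ob C;
  fmap : forall A B, hom A B -> hom (fobj A) (fobj B);
  fmap_id : forall A, fmap A A (idm A) = idm (fobj A);
  fmap_comp : forall (A B D : ob C) (g : hom B D) (f : hom A B),
      fmap A D (g ∘ f) = fmap B D g ∘ fmap A B f
}.
Arguments fobj {C} _ _.
Arguments fmap {C} _ {A B} _.

Section Defs.
Context {C : Cat} (K : Coproducts C).

Definition summap {A B A' B'} (f : hom A A') (g : hom B B')
  : hom (cop K A B) (cop K A' B') :=
  copair K (inl_ K ∘ f) (inr_ K ∘ g).

Lemma summap_id A B : summap (idm A) (idm B) = idm (cop K A B).
Proof.
  symmetry. unfold summap. apply copair_uniq;
  rewrite cmp_id_l; symmetry; apply cmp_id_r.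
Qed.

Lemma summap_comp A B A' B' A'' B'' (f : hom A A') (g : hom B B')
  (f' : hom A' A'') (g' : hom B' B'') :
  summap (f' ∘ f) (g' ∘ g) = summap f' g' ∘ summap f g.
Proof.
  symmetry. unfold summap. apply copair_uniq.
  - rewrite <- cmp_assoc, copair_inl, cmp_assoc, copair_inl, cmp_assoc. reflexivity.
  - rewrite <- cmp_assoc, copair_inr, cmp_assoc, copair_inr, cmp_assoc. reflexivity.
Qed.

Definition FSum (H V : Functor C) : Functor C := {|
  fobj := fun X => cop K (fobj H X) (fobj V X);
  fmap := fun A B f => summap (fmap H f) (fmap V f);
  fmap_id := fun A => eq_trans
     (f_equal2 summap (@fmap_id _ H A) (@fmap_id _ V A)) (summap_id _ _);
  fmap_comp := fun A B D g f => eq_trans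
     (f_equal2 summap (@fmap_comp _ H _ _ _ g f) (@fmap_comp _ V _ _ _ g f))
     (summap_comp _ _ _ _ _ _ _ _ _ _)
|}.

(* G is iteratable: for every X a (chosen) terminal coalgebra
   (T X, out_X : T X -> G (T X) + X) for G(-) + X, given by its unique
   coalgebra-morphism operation [unfold]. *)
Record Iteratable (G : Functor C) := {
  TT : ob C -> ob C;
  out : forall X, hom (TT X) (cop K (fobj G (TT X)) X);
  unfold : forall X Y, hom Y (cop K (fobj G Y) X) -> hom Y (TT X);
  unfold_eq : forall (X Y : ob C) (c : hom Y (cop K (fobj G Y) X)),
      out X ∘ unfold X Y c = summap (fmap G (unfold X Y c)) (idm X) ∘ c;
  unfold_uniq : forall (X Y : ob C) (c : hom Y (cop K (fobj G Y) X)) (h : hom Y (TT X)),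
      out X ∘ h = summap (fmap G h) (idm X) ∘ c -> h = unfold X Y c
}.
Arguments TT {G} _ _.
Arguments out {G} _ _.
Arguments unfold {G} _ {X Y} _.

Section Monad.
Context {G : Functor C} (I : Iteratable G).

(* the inverse [tau_X, eta_X] of out_X (Lambek), defined by coinduction *)
Definition outinv X : hom (cop K (fobj G (TT I X)) X) (TT I X) :=
  unfold I (summap (fmap G (out I X)) (idm X)).
Definition tau X : hom (fobj G (TT I X)) (TT I X) := outinv X ∘ inl_ K.
Definition eta X : hom X (TT I X) := outinv X ∘ inr_ K.

Definition Tmap {X Y} (f : hom X Y) : hom (TT I X) (TT I Y) :=
  unfold I (summap (idm (fobj G (TT I X))) f ∘ out I X).

(* multiplication mu_X : T T X -> T X, by the standard corecursive
   definition on the coalgebra T T X + T X *)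
Definition mu_c2 X : hom (TT I X) (cop K (fobj G (cop K (TT I (TT I X)) (TT I X))) X) :=
  summap (fmap G (inr_ K)) (idm X) ∘ out I X.
Definition mu_c1 X : hom (TT I (TT I X)) (cop K (fobj G (cop K (TT I (TT I X)) (TT I X))) X) :=
  copair K (inl_ K ∘ fmap G (inl_ K)) (mu_c2 X) ∘ out I (TT I X).
Definition mu X : hom (TT I (TT I X)) (TT I X) :=
  unfold I (copair K (mu_c1 X) (mu_c2 X)) ∘ inl_ K.

Definition kappa X : hom (fobj G X) (TT I X) := tau X ∘ fmap G (eta X).

Definition is_EM_alg A (b : hom (TT I A) A) : Prop :=
  b ∘ eta A = idm A /\ b ∘ mu A = b ∘ Tmap b.

End Monad.

Definition is_cia (G : Functor C) (A : ob C) (a : hom (fobj G A) A) : Prop :=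
  forall X (e : hom X (cop K (fobj G X) A)),
    exists! s : hom X A, s = copair K a (idm A) ∘ summap (fmap G s) (idm A) ∘ e.

Section Rps.
Context (H V : Functor C) (I : Iteratable (FSum H V)).

Definition rps_natural (e : forall X, hom (fobj V X) (TT I X)) : Prop :=
  forall X Y (f : hom X Y), e Y ∘ fmap V f = Tmap I f ∘ e X.

Definition guarded (e : forall X, hom (fobj V X) (TT I X)) : Prop :=
  exists f : forall X, hom (fobj V X) (fobj H (TT I X)),
    (forall X Y (g : hom X Y), f Y ∘ fmap V g = fmap H (Tmap I g) ∘ f X) /\
    (forall X, e X = tau I X ∘ inl_ K ∘ f X).

Definition interpreted_solution (A : ob C) (a : hom (fobj H A) A)
  (e : forall X, hom (fobj V X) (TT I X)) (s : hom (fobj V A) A) : Prop :=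
  exists b : hom (TT I A) A,
    is_EM_alg I A b /\ b ∘ kappa I A = copair K a s /\ s = b ∘ e A.

End Rps.
End Defs.

Arguments TT {C K G} _ _.
Arguments out {C K G} _ _.
Arguments unfold {C K G} _ {X Y} _.

(* Main.v *)
Require Import Defs.

Section Gen.
Context {C : Cat} (K : Coproducts C).

Lemma cmp_copair {A B D E} (f : hom A D) (g : hom B D) (h : hom D E) :
  h ∘ copair K f g = copair K (h ∘ f) (h ∘ g).
Proof.
  apply copair_uniq.
  - rewrite <- cmp_assoc, copair_inl; reflexivity.
  - rewrite <- cmp_assoc, copair_inr; reflexivity.
Qed.

Lemma cmp_copair_r {A B D E Z} (f : hom A D) (g : hom B D) (h : hom D E) (r : hom Z (cop K A B)) :
  h ∘ (copair K f g ∘ r) = copair K (h ∘ f) (h ∘ g) ∘ r.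
Proof. rewrite cmp_assoc, cmp_copair; reflexivity. Qed.

Lemma copair_inl_r {A B D Z} (f : hom A D) (g : hom B D) (r : hom Z A) :
  copair K f g ∘ (inl_ K ∘ r) = f ∘ r.
Proof. rewrite cmp_assoc, copair_inl; reflexivity. Qed.

Lemma copair_inr_r {A B D Z} (f : hom A D) (g : hom B D) (r : hom Z B) :
  copair K f g ∘ (inr_ K ∘ r) = g ∘ r.
Proof. rewrite cmp_assoc, copair_inr; reflexivity. Qed.

Lemma cop_ext {A B D} (h1 h2 : hom (cop K A B) D) :
  h1 ∘ inl_ K = h2 ∘ inl_ K -> h1 ∘ inr_ K = h2 ∘ inr_ K -> h1 = h2.
Proof.
  intros E1 E2. rewrite (copair_uniq _ K A B D _ _ h1 eq_refl eq_refl), (copair_uniq _ K A B D _ _ h2 eq_refl eq_refl), E1, E2; reflexivity.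
Qed.

Lemma copair_ext {A B D} (f f' : hom A D) (g g' : hom B D) :
  f = f' -> g = g' -> copair K f g = copair K f' g'.
Proof. intros; subst; reflexivity. Qed.

End Gen.

Create HintDb catn.
#[export] Hint Rewrite <- cmp_assoc : catn.
#[export] Hint Rewrite cmp_id_l cmp_id_r copair_inl copair_inr : catn.
#[export] Hint Rewrite @copair_inl_r @copair_inr_r @cmp_copair @cmp_copair_r : catn.
#[export] Hint Rewrite fmap_comp fmap_id : catn.
Ltac norm := unfold summap in *; autorewrite with catn in *.

Section Mon.
Context {C : Cat} (K : Coproducts C) {G : Functor C} (I : Iteratable K G).

Lemma sm_comp {A B A' B' A'' B''} (f : hom A A') (g : hom B B') (f' : hom A' A'') (g' : hom B' B'') Z (x : hom Z _) :
  summap K f' g' ∘ (summap K f g ∘ x) = summap K (f' ∘ f) (g' ∘ g) ∘ x.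
Proof. rewrite cmp_assoc, summap_comp; reflexivity. Qed.

Lemma sum_inr {A B A' B'} (f : hom A A') (g : hom B B') : summap K f g ∘ inr_ K = inr_ K ∘ g.
Proof. unfold summap; apply copair_inr. Qed.
Lemma sum_inl {A B A' B'} (f : hom A A') (g : hom B B') : summap K f g ∘ inl_ K = inl_ K ∘ f.
Proof. unfold summap; apply copair_inl. Qed.

Lemma sum_inl_r {A B A' B' Z} (f : hom A A') (g : hom B B') (r : hom Z A) : summap K f g ∘ (inl_ K ∘ r) = inl_ K ∘ (f ∘ r).
Proof. rewrite !cmp_assoc, sum_inl. reflexivity. Qed.
Lemma sum_inr_r {A B A' B' Z} (f : hom A A') (g : hom B B') (r : hom Z B) : summap K f g ∘ (inr_ K ∘ r) = inr_ K ∘ (g ∘ r).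
Proof. rewrite !cmp_assoc, sum_inr. reflexivity. Qed.

Lemma copair_summap {A B A' B' D} (f : hom A A') (g : hom B B') (p : hom A' D) (q : hom B' D) :
  copair K p q ∘ summap K f g = copair K (p ∘ f) (q ∘ g).
Proof. apply cop_ext; rewrite <- cmp_assoc; [rewrite sum_inl | rewrite sum_inr];
  rewrite cmp_assoc; [rewrite !copair_inl | rewrite !copair_inr]; reflexivity. Qed.

Lemma unfold_two {X Y} (c : hom Y (cop K (fobj G Y) X)) (h1 h2 : hom Y (TT I X)) :
  out I X ∘ h1 = summap K (fmap G h1) (idm X) ∘ c ->
  out I X ∘ h2 = summap K (fmap G h2) (idm X) ∘ c -> h1 = h2.
Proof. intros E1 E2. rewrite (unfold_uniq _ _ _ _ _ _ _ E1), (unfold_uniq _ _ _ _ _ _ _ E2). reflexivity. Qed.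

Lemma outinv_out X : outinv K I X ∘ out I X = idm _.
Proof.
  apply (unfold_two (out I X)).
  - unfold outinv. rewrite cmp_assoc, unfold_eq, <- cmp_assoc, sm_comp, <- fmap_comp, cmp_id_l. reflexivity.
  - rewrite cmp_id_r, fmap_id, summap_id, cmp_id_l. reflexivity.
Qed.

Lemma out_outinv X : out I X ∘ outinv K I X = idm _.
Proof.
  unfold outinv at 1. rewrite unfold_eq. fold (outinv K I X).
  rewrite <- summap_comp, <- fmap_comp, outinv_out, fmap_id, cmp_id_l, summap_id. reflexivity.
Qed.

Lemma out_mono {X Y} (f g : hom Y (TT I X)) : out I X ∘ f = out I X ∘ g -> f = g.
Proof.
  intro E. rewrite <- (cmp_id_l _ _ _ f), <- (cmp_id_l _ _ _ g), <- outinv_out,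
   <- !cmp_assoc, E. reflexivity.
Qed.

Lemma out_tau X : out I X ∘ tau K I X = inl_ K.
Proof. unfold tau. rewrite cmp_assoc, out_outinv, cmp_id_l. reflexivity. Qed.
Lemma out_eta X : out I X ∘ eta K I X = inr_ K.
Proof. unfold eta. rewrite cmp_assoc, out_outinv, cmp_id_l. reflexivity. Qed.
Lemma out_tau_r X Z (r : hom Z _) : out I X ∘ (tau K I X ∘ r) = inl_ K ∘ r.
Proof. rewrite cmp_assoc, out_tau. reflexivity. Qed.
Lemma out_eta_r X Z (r : hom Z _) : out I X ∘ (eta K I X ∘ r) = inr_ K ∘ r.
Proof. rewrite cmp_assoc, out_eta. reflexivity. Qed.

Lemma out_Tmap {X Y} (f : hom X Y) :
  out I Y ∘ Tmap K I f = summap K (fmap G (Tmap K I f)) f ∘ out I X.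
Proof.
  unfold Tmap at 1. rewrite unfold_eq. fold (Tmap K I f).
  rewrite cmp_assoc, <- summap_comp, cmp_id_l, cmp_id_r. reflexivity.
Qed.
Lemma out_Tmap_r {X Y Z} (f : hom X Y) (r : hom Z _) :
  out I Y ∘ (Tmap K I f ∘ r) = summap K (fmap G (Tmap K I f)) f ∘ (out I X ∘ r).
Proof. rewrite cmp_assoc, out_Tmap, cmp_assoc. reflexivity. Qed.

Lemma Tmap_eta {X Y} (f : hom X Y) : Tmap K I f ∘ eta K I X = eta K I Y ∘ f.
Proof.
  apply out_mono. rewrite cmp_assoc, out_Tmap, <- cmp_assoc, out_eta, cmp_assoc, out_eta.
  unfold summap. rewrite copair_inr. reflexivity.
Qed.

Lemma Tmap_tau {X Y} (f : hom X Y) : Tmap K I f ∘ tau K I X = tau K I Y ∘ fmap G (Tmap K I f).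
Proof.
  apply out_mono. rewrite cmp_assoc, out_Tmap, <- cmp_assoc, out_tau, cmp_assoc, out_tau.
  unfold summap. rewrite copair_inl. reflexivity.
Qed.

Lemma Tmap_comp {X Y Z} (f : hom X Y) (g : hom Y Z) : Tmap K I (g ∘ f) = Tmap K I g ∘ Tmap K I f.
Proof.
  apply (unfold_two (summap K (idm _) (g ∘ f) ∘ out I X)).
  - rewrite out_Tmap, sm_comp, cmp_id_l, cmp_id_r. reflexivity.
  - rewrite cmp_assoc, out_Tmap, <- cmp_assoc, out_Tmap, sm_comp, sm_comp, <- fmap_comp.
    rewrite cmp_id_l, cmp_id_r. reflexivity.
Qed.

Definition U X := unfold I (copair K (mu_c1 K I X) (mu_c2 K I X)).

Lemma out_U X : out I X ∘ U X = summap K (fmap G (U X)) (idm X) ∘ copair K (mu_c1 K I X) (mu_c2 K I X).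
Proof. apply unfold_eq. Qed.

Lemma U_inr X : U X ∘ inr_ K = idm _.
Proof.
  apply (unfold_two (out I X)).
  - rewrite cmp_assoc, out_U, <- cmp_assoc, copair_inr. unfold mu_c2.
    rewrite sm_comp, <- fmap_comp, cmp_id_l. reflexivity.
  - rewrite cmp_id_r, fmap_id, summap_id, cmp_id_l. reflexivity.
Qed.

Lemma mu_eta X : mu K I X ∘ eta K I (TT I X) = idm _.
Proof.
  apply out_mono. unfold mu. rewrite <- !cmp_assoc, (cmp_assoc _ _ _ _ _ (out I X)), out_U.
  rewrite <- !cmp_assoc, copair_inl_r. unfold mu_c1. rewrite <- !cmp_assoc, out_eta, copair_inr.
  transitivity (out I X ∘ (U X ∘ inr_ K)).
  - rewrite cmp_assoc, out_U, <- cmp_assoc, copair_inr. reflexivity.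
  - rewrite U_inr. reflexivity.
Qed.

Lemma mu_tau X : mu K I X ∘ tau K I (TT I X) = tau K I X ∘ fmap G (mu K I X).
Proof.
  apply out_mono. unfold mu. rewrite <- !cmp_assoc, (cmp_assoc _ _ _ _ _ (out I X)), out_U.
  rewrite <- !cmp_assoc, copair_inl_r. unfold mu_c1. rewrite <- !cmp_assoc, out_tau, copair_inl.
  rewrite out_tau_r, cmp_assoc. unfold summap. rewrite copair_inl, <- cmp_assoc, <- fmap_comp.
  reflexivity.
Qed.

Lemma mu_nat {X Y} (g : hom X Y) : mu K I Y ∘ Tmap K I (Tmap K I g) = Tmap K I g ∘ mu K I X.
Proof.
  assert (Hc2 : mu_c2 K I Y ∘ Tmap K I g =
     summap K (fmap G (summap K (Tmap K I (Tmap K I g)) (Tmap K I g))) g ∘ mu_c2 K I X).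
  { unfold mu_c2. rewrite <- !cmp_assoc, out_Tmap, !sm_comp, <- !fmap_comp, sum_inr.
    rewrite !cmp_id_l, cmp_id_r. reflexivity. }
  assert (Hd : copair K (mu_c1 K I Y) (mu_c2 K I Y) ∘ summap K (Tmap K I (Tmap K I g)) (Tmap K I g)
     = summap K (fmap G (summap K (Tmap K I (Tmap K I g)) (Tmap K I g))) g ∘ copair K (mu_c1 K I X) (mu_c2 K I X)).
  { apply cop_ext.
    - rewrite <- cmp_assoc, sum_inl, cmp_assoc, copair_inl, <- cmp_assoc, copair_inl.
      unfold mu_c1. rewrite <- cmp_assoc, out_Tmap, cmp_assoc, copair_summap.
      rewrite cmp_assoc, cmp_copair. f_equal. apply copair_ext.
      + rewrite cmp_assoc, sum_inl, <- !cmp_assoc, <- !fmap_comp, sum_inl. reflexivity.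
      + rewrite Hc2. reflexivity.
    - unfold summap at 1. rewrite <- cmp_assoc, copair_inr, cmp_assoc, copair_inr.
      rewrite <- cmp_assoc, copair_inr. exact Hc2. }
  assert (E : U Y ∘ summap K (Tmap K I (Tmap K I g)) (Tmap K I g) = Tmap K I g ∘ U X).
  { apply (unfold_two (summap K (idm _) g ∘ copair K (mu_c1 K I X) (mu_c2 K I X))).
    - rewrite cmp_assoc, out_U, <- cmp_assoc, Hd, cmp_assoc, <- summap_comp, <- fmap_comp, sm_comp.
      rewrite !cmp_id_l, !cmp_id_r. reflexivity.
    - rewrite cmp_assoc, out_Tmap, <- cmp_assoc, out_U, sm_comp, <- fmap_comp, sm_comp.
      rewrite !cmp_id_l, !cmp_id_r. reflexivity. }
  change (U Y ∘ inl_ K ∘ Tmap K I (Tmap K I g) = Tmap K I g ∘ (U X ∘ inl_ K)).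
  rewrite <- cmp_assoc, <- (sum_inl (Tmap K I (Tmap K I g)) (Tmap K I g)), cmp_assoc, E, cmp_assoc.
  reflexivity.
Qed.

Lemma tau_decomp A : tau K I A = mu K I A ∘ tau K I (TT I A) ∘ fmap G (eta K I (TT I A)).
Proof. rewrite mu_tau, <- cmp_assoc, <- fmap_comp, mu_eta, fmap_id, cmp_id_r. reflexivity. Qed.

Lemma EM_tau A (b : hom (TT I A) A) : b ∘ mu K I A = b ∘ Tmap K I b ->
  b ∘ tau K I A = b ∘ kappa K I A ∘ fmap G b.
Proof.
  intro Hb. rewrite tau_decomp, !cmp_assoc, Hb, <- (cmp_assoc _ _ _ _ _ b), Tmap_tau.
  rewrite <- !cmp_assoc, <- fmap_comp, Tmap_eta. unfold kappa. rewrite fmap_comp, <- !cmp_assoc.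
  reflexivity.
Qed.

Lemma outinv_eq X : outinv K I X = copair K (tau K I X) (eta K I X).
Proof. apply copair_uniq; reflexivity. Qed.

End Mon.

Theorem mainTheorem4 (C : Cat) (K : Coproducts C) (H V : Functor C)
  (I : Iteratable K (FSum K H V)) (A : ob C) (a : hom (fobj H A) A)
  (e : forall X, hom (fobj V X) (TT I X)) (s : hom (fobj V A) A) :
  is_cia K H A a ->
  rps_natural K H V I e ->
  guarded K H V I e ->
  interpreted_solution K H V I A a e s ->
  is_cia K (FSum K H V) A (copair K a s).
Proof.
  intros Hcia Hnat [phi [_ Hphi]] [b [[Hbeta Hbmu] [Hbk Hs]]].
  assert (Bt : b ∘ tau K I A = copair K a s ∘ fmap (FSum K H V) b).
  { rewrite (EM_tau K I A b Hbmu), Hbk. reflexivity. }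
  assert (Binl : forall Y Z (x : hom Y Z), @cmp C _ (fobj (FSum K H V) Y) (cop K (fobj H Z) (fobj V Z)) (fmap (FSum K H V) x) (inl_ K) = inl_ K ∘ fmap H x).
  { intros. exact (sum_inl K _ _). }
  assert (Binr : forall Y Z (x : hom Y Z), @cmp C _ (fobj (FSum K H V) Y) (cop K (fobj H Z) (fobj V Z)) (fmap (FSum K H V) x) (inr_ K) = inr_ K ∘ fmap V x).
  { intros. exact (sum_inr K _ _). }
  assert (ktau : forall Y (h : hom Y A), b ∘ Tmap K I h ∘ tau K I Y = copair K a s ∘ fmap (FSum K H V) (b ∘ Tmap K I h)).
  { intros. rewrite <- cmp_assoc, Tmap_tau, cmp_assoc, Bt, fmap_comp, cmp_assoc. reflexivity. }
  assert (sV : forall Y (h : hom Y A), s ∘ fmap V h = a ∘ fmap H (b ∘ Tmap K I h) ∘ phi Y).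
  { intros. rewrite Hs, <- cmp_assoc, Hnat, Hphi, cmp_assoc, !cmp_assoc, ktau.
    rewrite <- (cmp_assoc _ _ _ _ _ (copair K a s)), Binl, copair_inl_r. reflexivity. }
  assert (kmu : forall Y (g : hom Y A), b ∘ Tmap K I (b ∘ Tmap K I g) = b ∘ Tmap K I g ∘ mu K I Y).
  { intros. rewrite Tmap_comp, cmp_assoc, <- Hbmu, <- !cmp_assoc, mu_nat. reflexivity. }
  assert (keta : forall Y (g : hom Y A), b ∘ Tmap K I g ∘ eta K I Y = g).
  { intros. rewrite <- cmp_assoc, Tmap_eta, cmp_assoc, Hbeta, cmp_id_l. reflexivity. }
  intros X f.
  set (c3 := copair K (copair K (inl_ K ∘ fmap H (eta K I X)) (inl_ K ∘ phi X)) (inr_ K) : hom (cop K (fobj (FSum K H V) X) A) (cop K (fobj H (TT I X)) A)).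
  set (c1 := copair K (inl_ K) (inl_ K ∘ fmap H (mu K I X) ∘ phi (TT I X)) : hom (fobj (FSum K H V) (TT I X)) (cop K (fobj H (TT I X)) A)).
  set (c := copair K c1 (c3 ∘ f) ∘ out I X).
  assert (Claim : forall g : hom X A, g = copair K (copair K a s) (idm A) ∘ summap K (fmap (FSum K H V) g) (idm A) ∘ f ->
    b ∘ Tmap K I g = copair K a (idm A) ∘ summap K (fmap H (b ∘ Tmap K I g)) (idm A) ∘ c).
  { intros g Hg.
    transitivity (b ∘ Tmap K I g ∘ outinv K I X ∘ out I X).
    { rewrite <- cmp_assoc, outinv_out, cmp_id_r. reflexivity. }
    unfold c. rewrite cmp_assoc. apply (f_equal (fun z => z ∘ out I X)).
    rewrite outinv_eq, cmp_copair, cmp_copair. apply copair_ext.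
    - rewrite ktau. apply cop_ext.
      + rewrite <- cmp_assoc, Binl, copair_inl_r.
        rewrite <- (cmp_assoc _ _ _ _ _ _ c1). unfold c1. cbn [fobj fmap FSum]. rewrite copair_inl.
        rewrite <- cmp_assoc, sum_inl, copair_inl_r. reflexivity.
      + rewrite <- cmp_assoc, Binr, copair_inr_r, sV, kmu.
        rewrite <- (cmp_assoc _ _ _ _ _ _ c1). unfold c1. cbn [fobj fmap FSum]. rewrite copair_inr.
        rewrite !cmp_assoc, <- (cmp_assoc _ _ _ _ _ (copair K a (idm A)) _ (inl_ K)), sum_inl, copair_inl_r, fmap_comp, !cmp_assoc.
        reflexivity.
    - rewrite keta. rewrite Hg at 1. rewrite (cmp_assoc _ _ _ _ _ _ c3 f).
      apply (f_equal (fun z => z ∘ f)). unfold c3. cbn [fobj fmap FSum].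
      rewrite copair_summap, cmp_id_r. apply cop_ext.
      + rewrite copair_inl, <- !cmp_assoc, copair_inl. apply cop_ext.
        * rewrite <- !cmp_assoc, copair_inl, sum_inl, copair_inl_r, sum_inl_r, copair_inl_r.
          rewrite <- fmap_comp, keta. reflexivity.
        * rewrite <- !cmp_assoc, copair_inr, sum_inr, copair_inr_r, sV, sum_inl_r, copair_inl_r, cmp_assoc.
          reflexivity.
      + rewrite copair_inr, <- !cmp_assoc, copair_inr, sum_inr, copair_inr_r, !cmp_id_l. reflexivity. }
  destruct (Hcia (TT I X) c) as [k0 [Hk0 Uk0]].
  assert (solk : forall g : hom X A, g = copair K (copair K a s) (idm A) ∘ summap K (fmap (FSum K H V) g) (idm A) ∘ f ->
    g = k0 ∘ eta K I X).
  { intros g Hg. rewrite <- (keta _ g) at 1. apply (f_equal (fun z => z ∘ eta K I X)).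
    symmetry. apply Uk0. apply Claim. exact Hg. }
  set (uf := unfold I f).
  assert (Huf : uf = copair K (tau K I A) (eta K I A) ∘ summap K (fmap (FSum K H V) uf) (idm A) ∘ f).
  { transitivity (outinv K I A ∘ out I A ∘ uf).
    - rewrite outinv_out, cmp_id_l. reflexivity.
    - rewrite <- cmp_assoc. unfold uf. rewrite unfold_eq, outinv_eq, cmp_assoc. reflexivity. }
  assert (Hw : b ∘ uf = copair K (copair K a s) (idm A) ∘ summap K (fmap (FSum K H V) (b ∘ uf)) (idm A) ∘ f).
  { transitivity (b ∘ (copair K (tau K I A) (eta K I A) ∘ summap K (fmap (FSum K H V) uf) (idm A) ∘ f)).
    - f_equal. exact Huf.
    - rewrite !cmp_assoc, cmp_copair, Bt, Hbeta, !copair_summap, fmap_comp, cmp_assoc. reflexivity. }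
  exists (b ∘ uf). split.
  - exact Hw.
  - intros x' Hx'. rewrite (solk _ Hw), (solk _ Hx'). reflexivity.
Qed.
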